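(* Let $B$ be a C*-algebra and let $A$ be a closed *-subalgebra of $B$ satisfying the ideal intersection property and axiom (inv) relative to $B$. Let $\mathscr{R}(B)$ be the family of all regular ideals of $B$, and $\mathscr{R}_{\mathrm{inv}}(A)$ the family of all regular, $B$-invariant ideals of $A$. Then the map $$\alpha: J\in\mathscr{R}(B)\mapsto J\cap A\in\mathscr{R}_{\mathrm{inv}}(A)$$ is well defined and is a boolean algebra isomorphism (an inclusion-preserving bijection with inclusion-preserving inverse), and its inverse is given by $$\beta: I\in\mathscr{R}_{\mathrm{inv}}(A)\mapsto \mathrm{Ann}_B(\mathrm{Ann}_B(I))\in\mathscr{R}(B).$$
   Context: Ideals are closed two-sided ideals. For a C*-algebra $C$ and $S\subseteq C$, $[S]$ is the closed linear span, and $S$ is $C$-invariant if $[SC]=[CS]$. For $C$-invariant $S$, $\{x\in C: xs=0\ \forall s\in S\}=\{x\in C: sx=0\ \forall s\in S\}$, denoted $\mathrm{Ann}_C(S)$ (every ideal of $C$ is $C$-invariant). An ideal $J$ of $C$ is regular if $\mathrm{Ann}_C(\mathrm{Ann}_C(J))=J$. Regular ideals of $C$ form a boolean algebra with order given by inclusion, meet $J_1\cap J_2$, join $\mathrm{Ann}_C(\mathrm{Ann}_C(J_1+J_2))$ and negation $\mathrm{Ann}_C(J)$. $A$ satisfies the ideal intersection property relative to $B$ if $J\cap A\neq\{0\}$ for every nonzero ideal $J$ of $B$; $A$ satisfies axiom (inv) relative to $B$ if $J\cap A$ is $B$-invariant for every ideal $J$ of $B$. *)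

(* Defs.v *)
From HB Require Import structures.
From mathcomp Require Import all_boot all_order all_algebra.
From mathcomp Require Import all_classical all_reals all_analysis.
From mathcomp Require Import complex.
Set Implicit Arguments.
Unset Strict Implicit.
Unset Printing Implicit Defensive.
Import Order.TTheory GRing.Theory Num.Theory.
Local Open Scope classical_set_scope.
Local Open Scope ring_scope.
Local Open Scope complex_scope.

Record is_cstar_algebra (R : realType) (U : completeNormedModType R[i])
    (mul : U -> U -> U) (star : U -> U) : Prop := IsCStarAlgebra {
  mulA : forall x y z, mul x (mul y z) = mul (mul x y) z;
  mulDl : forall x y z, mul (x + y) z = mul x z + mul y z;
  mulDr : forall x y z, mul x (y + z) = mul x y + mul x z;
  mulZl : forall (a : R[i]) x y, mul (a *: x) y = a *: mul x y;
  mulZr : forall (a : R[i]) x y, mul x (a *: y) = a *: mul x y;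
  starK : forall x, star (star x) = x;
  starD : forall x y, star (x + y) = star x + star y;
  starZ : forall (a : R[i]) x, star (a *: x) = a^* *: star x;
  starM : forall x y, star (mul x y) = mul (star y) (star x);
  normM : forall x y, `|mul x y| <= `|x| * `|y|;
  norm_cstar : forall x, `|mul (star x) x| = `|x| ^+ 2
}.

Section Defs.
Context {R : realType} {U : completeNormedModType R[i]}.
Variables (mul : U -> U -> U) (star : U -> U).

Definition closed_star_subalg (A : set U) : Prop :=
  [/\ A 0,
      (forall x y, A x -> A y -> A (x + y)),
      (forall (a : R[i]) x, A x -> A (a *: x)),
      (forall x y, A x -> A y -> A (mul x y)) /\
      (forall x, A x -> A (star x)) &
      closed A].

Definition lin_span (S : set U) : set U :=
  [set x | exists n (c : 'I_n -> R[i]) (s : 'I_n -> U),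
             (forall i, S (s i)) /\ x = \sum_(i < n) c i *: s i].
Definition clspan (S : set U) : set U := closure (lin_span S).

Definition prodset (S T : set U) : set U :=
  [set x | exists s t, [/\ S s, T t & x = mul s t]].

Definition is_invariant (C S : set U) : Prop :=
  clspan (prodset S C) = clspan (prodset C S).

Definition closed_ideal (C J : set U) : Prop :=
  [/\ J `<=` C, J 0,
      (forall x y, J x -> J y -> J (x + y)),
      (forall (a : R[i]) x, J x -> J (a *: x)) /\
      (forall c x, C c -> J x -> J (mul c x) /\ J (mul x c)) &
      closed J].

Definition Ann (C S : set U) : set U :=
  [set x | C x /\ forall s, S s -> mul x s = 0].

Definition regular_ideal (C J : set U) : Prop :=
  closed_ideal C J /\ Ann C (Ann C J) = J.

Definition ideal_intersection_property (A B : set U) : Prop :=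
  forall J, closed_ideal B J -> J <> [set 0] -> J `&` A <> [set 0].

Definition axiom_inv (A B : set U) : Prop :=
  forall J, closed_ideal B J -> is_invariant B (J `&` A).

End Defs.

(* Main.v *)
Require Import Defs.
From HB Require Import structures.
From mathcomp Require Import all_boot all_order all_algebra.
From mathcomp Require Import all_classical all_reals all_analysis.
From mathcomp Require Import complex.
Import Order.TTheory GRing.Theory Num.Theory.
Set Implicit Arguments.
Unset Strict Implicit.
Local Open Scope classical_set_scope.
Local Open Scope ring_scope.

Lemma mul0x (R : realType) (U : completeNormedModType R[i]) (mul : U -> U -> U) star :
  is_cstar_algebra mul star -> forall y, mul 0 y = 0.
Proof. by move=> H y; rewrite -(scale0r (0:U)) (Defs.mulZl H) !scale0r. Qed.

Lemma mulx0 (R : realType) (U : completeNormedModType R[i]) (mul : U -> U -> U) star :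
  is_cstar_algebra mul star -> forall y, mul y 0 = 0.
Proof. by move=> H y; rewrite -(scale0r (0:U)) (Defs.mulZr H) !scale0r. Qed.

Lemma star0 (R : realType) (U : completeNormedModType R[i]) (mul : U -> U -> U) star :
  is_cstar_algebra mul star -> star 0 = 0.
Proof. by move=> H; apply: (addrI (star 0)); rewrite -(Defs.starD H) !addr0. Qed.

Lemma mulxB (R : realType) (U : completeNormedModType R[i]) (mul : U -> U -> U) star :
  is_cstar_algebra mul star -> forall x y z, mul x (y - z) = mul x y - mul x z.
Proof.
move=> H x y z; rewrite (Defs.mulDr H); congr (_ + _).
by rewrite -scaleN1r (Defs.mulZr H) scaleN1r.
Qed.

Lemma mulBx (R : realType) (U : completeNormedModType R[i]) (mul : U -> U -> U) star :
  is_cstar_algebra mul star -> forall x y z, mul (y - z) x = mul y x - mul z x.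
Proof.
move=> H x y z; rewrite (Defs.mulDl H); congr (_ + _).
by rewrite -scaleN1r (Defs.mulZl H) scaleN1r.
Qed.

Lemma N0 (R : realType) (U : completeNormedModType R[i]) (mul : U -> U -> U) star :
  is_cstar_algebra mul star -> forall w, mul (star w) w = 0 -> w = 0.
Proof.
move=> H w h; have := Defs.norm_cstar H w; rewrite h normr0 => /esym/eqP.
by rewrite expf_eq0 /= normr_eq0 => /eqP.
Qed.

Lemma closed_zero (R : realType) (U : completeNormedModType R[i]) (f : U -> U) (k : R[i]) :
  0 <= k -> (forall z w, `|f z - f w| <= k * `|z - w|) -> closed [set z | f z = 0].
Proof.
move=> k0 Hf z cz /=; apply: contrapT => fz.
have fz0 : 0 < `|f z| by rewrite normr_gt0; apply/eqP.
have k1 : 0 < k + 1 by rewrite ltr_wpDl.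
have e0 : 0 < `|f z| / (k + 1) by rewrite divr_gt0.
have [w [/= fw bw]] := cz _ (nbhsx_ballx z _ e0).
move: bw; rewrite -ball_normE /= => bw.
have : `|f z| < `|f z| ; last by rewrite ltxx.
have -> : `|f z| = `|f z - f w| by rewrite fw subr0.
apply: (le_lt_trans (Hf z w)).
apply: (le_lt_trans (y := (k + 1) * `|z - w|)).
  by rewrite ler_wpM2r // lerDl.
by rewrite fw subr0 -ltr_pdivlMl // mulrC.
Qed.

Lemma clspan_kill (R : realType) (U : completeNormedModType R[i]) (mul : U -> U -> U) star :
  is_cstar_algebra mul star -> forall (P : set U) x,
  (forall p, P p -> mul x p = 0) -> forall z, clspan P z -> mul x z = 0.
Proof.
move=> H P x hP z cz.
have lip : forall z w, `|mul x z - mul x w| <= `|x| * `|z - w|.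
  by move=> z' w; rewrite -(mulxB H) (Defs.normM H).
apply: (closed_zero (normr_ge0 x) lip); apply: (closureS _ cz).
move=> _ [n [c [s [hs ->]]]] /=.
apply: (big_ind (fun z => mul x z = 0)); first exact: (mulx0 H).
  by move=> a b ha hb; rewrite (Defs.mulDr H) ha hb addr0.
by move=> i _; rewrite (Defs.mulZr H) hP // scaler0.
Qed.

Lemma L_closed (R : realType) (U : completeNormedModType R[i]) (mul : U -> U -> U) star :
  is_cstar_algebra mul star -> forall (S : set U), closed (Ann mul setT S).
Proof.
move=> H S; rewrite /closed => z cz; split=> // s Ss.
have lip : forall z w, `|mul z s - mul w s| <= `|s| * `|z - w|.
  by move=> z' w; rewrite -(mulBx H) mulrC (Defs.normM H).
apply: (closed_zero (normr_ge0 s) lip); apply: (closureS _ cz).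
by move=> x [_ hx]; exact: hx s Ss.
Qed.

Lemma L_ideal (R : realType) (U : completeNormedModType R[i]) (mul : U -> U -> U) star :
  is_cstar_algebra mul star -> forall (S : set U),
  (forall x c s, Ann mul setT S x -> S s -> mul x (mul c s) = 0) ->
  closed_ideal mul setT (Ann mul setT S).
Proof.
move=> H S hS; split.
- by [].
- by split=> // s _; rewrite (mul0x H).
- move=> x y [_ hx] [_ hy]; split=> // s Ss.
  by rewrite (Defs.mulDl H) hx // hy // addr0.
- split.
    by move=> a x [_ hx]; split=> // s Ss; rewrite (Defs.mulZl H) hx // scaler0.
  move=> c x _ hx; split; split=> // s Ss.
    by rewrite -(Defs.mulA H) hx.2 // (mulx0 H).
  by rewrite -(Defs.mulA H) hS.
- exact: L_closed H S.
Qed.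

Lemma ideal_kill (R : realType) (U : completeNormedModType R[i]) (mul : U -> U -> U) star :
  is_cstar_algebra mul star -> forall (J : set U), closed_ideal mul setT J ->
  forall x c s, Ann mul setT J x -> J s -> mul x (mul c s) = 0.
Proof.
move=> H J [_ _ _ [_ hm] _] x c s [_ hx] Js.
by apply: hx; exact: (hm c s I Js).1.
Qed.

Lemma inv_kill (R : realType) (U : completeNormedModType R[i]) (mul : U -> U -> U) star :
  is_cstar_algebra mul star -> forall (S : set U), is_invariant mul setT S ->
  forall x c s, Ann mul setT S x -> S s -> mul x (mul c s) = 0.
Proof.
move=> H S hinv x c s [_ hx] Ss.
have : clspan (prodset mul setT S) (mul c s).
  apply: subset_closure; exists 1%N, (fun _ => 1), (fun _ => mul c s); split=> //.
    by move=> _; exists c, s.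
  by rewrite big_ord1 scale1r.
rewrite -hinv; apply: (clspan_kill H).
by move=> _ [s' [b [Ss' _ ->]]]; rewrite (Defs.mulA H) hx // (mul0x H).
Qed.

Lemma closed_idealI (R : realType) (U : completeNormedModType R[i]) (mul : U -> U -> U) (C J1 J2 : set U) :
  closed_ideal mul C J1 -> closed_ideal mul C J2 -> closed_ideal mul C (J1 `&` J2).
Proof.
move=> [s1 z1 a1 [sc1 m1] c1] [s2 z2 a2 [sc2 m2] c2]; split.
- by move=> x [/s1].
- by [].
- by move=> x y [? ?] [? ?]; split; [exact: a1 | exact: a2].
- split; first by move=> a x [? ?]; split; [exact: sc1 | exact: sc2].
  move=> c x Cc [h1 h2]; have [? ?] := m1 c x Cc h1; have [? ?] := m2 c x Cc h2.
  by split; split.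
- exact: closedI.
Qed.

Lemma Sym (R : realType) (U : completeNormedModType R[i]) (mul : U -> U -> U) star :
  is_cstar_algebra mul star -> forall (K : set U) x y, closed_ideal mul setT K ->
  Ann mul setT K y -> K x -> mul x y = 0.
Proof.
move=> H K x y [_ _ _ [_ hm] _] [_ hy] Kx.
set w := mul (mul (star y) (star x)) x.
have Kw : K w by exact: (hm _ x I Kx).1.
have hyw : mul y w = 0 by exact: hy.
set z := mul x y; set h := mul (star z) z.
have eh : h = mul w y by rewrite /h /z (Defs.starM H) (Defs.mulA H).
have hs : star h = h by rewrite /h (Defs.starM H) (Defs.starK H).
have hh : mul h h = 0.
  rewrite eh -(Defs.mulA H) (Defs.mulA H y w y) hyw (mul0x H) (mulx0 H) //.
have h0 : h = 0 by apply: (N0 H); rewrite hs.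
exact: (N0 H).
Qed.

Lemma Zc (R : realType) (U : completeNormedModType R[i]) (mul : U -> U -> U) star :
  is_cstar_algebra mul star -> forall a,
  mul a (mul (mul (star a) a) (star a)) = 0 -> a = 0.
Proof.
move=> H a ha.
set h := mul a (star a).
have hs : star h = h by rewrite /h (Defs.starM H) (Defs.starK H).
have hh : mul h h = 0.
  by rewrite /h -(Defs.mulA H a (star a)) (Defs.mulA H (star a) a (star a)).
have h0 : h = 0 by apply: (N0 H); rewrite hs.
have sa0 : star a = 0 by apply: (N0 H); rewrite (Defs.starK H).
by rewrite -(Defs.starK H a) sa0 (star0 H).
Qed.

Lemma AnnA (R : realType) (U : completeNormedModType R[i]) (mul : U -> U -> U) (A S : set U) :
  Ann mul A S = A `&` Ann mul setT S.
Proof.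
by apply/seteqP; split=> x /=; [move=> [Ax hx] | move=> [Ax [_ hx]]].
Qed.

Lemma Ann_anti (R : realType) (U : completeNormedModType R[i]) (mul : U -> U -> U) (S T : set U) :
  S `<=` T -> Ann mul setT T `<=` Ann mul setT S.
Proof. by move=> ST x [_ hx]; split=> // s /ST; exact: hx. Qed.

Lemma LLL (R : realType) (U : completeNormedModType R[i]) (mul : U -> U -> U) star :
  is_cstar_algebra mul star -> forall (K : set U), closed_ideal mul setT K ->
  Ann mul setT (Ann mul setT (Ann mul setT K)) = Ann mul setT K.
Proof.
move=> H K hK.
have sub : forall K', closed_ideal mul setT K' -> K' `<=` Ann mul setT (Ann mul setT K').
  by move=> K' hK' k Kk; split=> // y hy; exact: (Sym H hK' hy Kk).
apply/seteqP; split; first exact/Ann_anti/sub.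
apply: sub; apply: (L_ideal H); exact: (ideal_kill H hK).
Qed.

Lemma L1 (R : realType) (U : completeNormedModType R[i]) (mul : U -> U -> U) star (A : set U) :
  is_cstar_algebra mul star ->
  closed_star_subalg mul star A ->
  ideal_intersection_property mul A setT ->
  axiom_inv mul A setT ->
  forall J, closed_ideal mul setT J -> Ann mul setT (J `&` A) = Ann mul setT J.
Proof.
move=> H hA hIIP hinv J hJ.
apply/seteqP; split; last first.
  by apply: Ann_anti => x [].
move=> y hy.
set K0 := Ann mul setT (J `&` A).
have hK0 : closed_ideal mul setT K0 := L_ideal H (inv_kill H (hinv J hJ)).
have hM := closed_idealI hK0 hJ.
have [_ zJ _ [_ mJ] _] := hJ.
have [zA _ _ [mA stA] _] := hA.
have M0 : K0 `&` J = [set 0].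
  apply: contrapT => hne; apply: (hIIP _ hM hne).
  apply/seteqP; split; last first.
    move=> _ ->; split=> //; split=> //; split=> // s _; exact: (mul0x H).
  move=> a [[[_ ha] Ja] Aa] /=; apply: (Zc H); apply: ha; split.
    apply: (mJ (star a) _ I (mJ (star a) a I Ja).1).2.
  exact: (mA _ _ (mA _ _ (stA _ Aa) Aa) (stA _ Aa)).
split=> // s Js.
have : (K0 `&` J) (mul y s).
  have [_ _ _ [_ mK] _] := hK0.
  by split; [exact: (mK s y I hy).2 | exact: (mJ y s I Js).1].
by rewrite M0.
Qed.
Theorem theorem3p5 (R : realType) (U : completeNormedModType R[i])
    (mul : U -> U -> U) (star : U -> U) (A : set U) :
  is_cstar_algebra mul star ->
  closed_star_subalg mul star A ->
  ideal_intersection_property mul A setT ->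
  axiom_inv mul A setT ->
  (* alpha : J |-> J ∩ A is well defined R(B) -> R_inv(A) *)
  (forall J, regular_ideal mul setT J ->
     regular_ideal mul A (J `&` A) /\ is_invariant mul setT (J `&` A)) /\
  (* beta : I |-> Ann_B(Ann_B(I)) is well defined R_inv(A) -> R(B) *)
  (forall I, regular_ideal mul A I -> is_invariant mul setT I ->
     regular_ideal mul setT (Ann mul setT (Ann mul setT I))) /\
  (* beta o alpha = id on R(B) *)
  (forall J, regular_ideal mul setT J -> Ann mul setT (Ann mul setT (J `&` A)) = J) /\
  (* alpha o beta = id on R_inv(A) *)
  (forall I, regular_ideal mul A I -> is_invariant mul setT I ->
     Ann mul setT (Ann mul setT I) `&` A = I) /\
  (* alpha preserves inclusion *)
  (forall J1 J2, regular_ideal mul setT J1 -> regular_ideal mul setT J2 ->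
     J1 `<=` J2 -> J1 `&` A `<=` J2 `&` A) /\
  (* beta = alpha^-1 preserves inclusion *)
  (forall I1 I2, regular_ideal mul A I1 -> is_invariant mul setT I1 ->
     regular_ideal mul A I2 -> is_invariant mul setT I2 ->
     I1 `<=` I2 -> Ann mul setT (Ann mul setT I1) `<=` Ann mul setT (Ann mul setT I2)).
Proof.
move=> H hA hIIP hinv.
have L1' := L1 H hA hIIP hinv.
have idL : forall J, closed_ideal mul setT J -> closed_ideal mul setT (Ann mul setT J).
  by move=> J hJ; apply: (L_ideal H); exact: (ideal_kill H hJ).
have idLI : forall I, is_invariant mul setT I -> closed_ideal mul setT (Ann mul setT I).
  by move=> I hI; apply: (L_ideal H); exact: (inv_kill H hI).
split.
  move=> J [hJ hreg]; split; last exact: hinv J hJ.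
  split.
    have [sJ zJ aJ [scJ mJ] cJ] := hJ.
    have [zA aA scA [mA stA] cA] := hA.
    split.
    - by move=> x [].
    - by [].
    - by move=> x y [? ?] [? ?]; split; [exact: aJ | exact: aA].
    - split; first by move=> a x [? ?]; split; [exact: scJ | exact: scA].
      move=> c x Ac [Jx Ax]; split; split.
      + exact: (mJ c x I Jx).1.
      + exact: mA.
      + exact: (mJ c x I Jx).2.
      + exact: mA.
    - exact: closedI.
  rewrite (AnnA mul A (J `&` A)) (AnnA mul A) (L1' J hJ) [A `&` Ann mul setT J]setIC (L1' _ (idL J hJ)) hreg.
  exact: setIC.
split.
  move=> I [hI hreg] hinvI; split; first exact/idL/idLI.
  exact: (LLL H (idLI I hinvI)).
split.
  by move=> J [hJ hreg]; rewrite (L1' J hJ).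
split.
  move=> I [hI hreg] hinvI.
  rewrite -(L1' _ (idLI I hinvI)).
  move: hreg; rewrite (AnnA mul A I) (AnnA mul A) => hreg.
  by rewrite setIC [Ann mul setT I `&` A]setIC.
split.
  by move=> J1 J2 _ _ J12 x [? ?]; split=> //; exact: J12.
move=> I1 I2 _ _ _ _ I12.
by apply: Ann_anti; apply: Ann_anti.
Qed.
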